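(* Let $d/2<k<d$ be integers with $4k-d-2>(2k-d)^2$, and let $H_*$ be the Hessian matrix of $\varphi$ at $\mathbf b^*$. Then $$\det(-H_* )=\frac{2k^2}{(d-1)(2k-d)^2}\big(4k-d-2-(2k-d)^2\big)\prod_{i=0}^{d-k}\frac1{b_i^*}>0.$$ Furthermore, if $\mathbf b^*$ is the unique global maximum of $\varphi$ on $K$, then $H_*$ is negative definite.
   Context: $\chi_i=\frac{d!}{(k-i)!\,(d-k-i)!\,(i!)^2}$ for $i=0,\dots,d-k$; $b_i^*=(\frac d{2k})^2\binom dk^{-2}\chi_i$. For $\mathbf b\in\mathbb{R}^{d-k+1}$, $\beta_{\mathbf b}=\sum_i b_i$, $\gamma_{\mathbf b}=\sum_i(k-i)b_i$; $K=\{\mathbf b: \frac{d-k}{k}\le\beta_{\mathbf b}\le\frac d{2k},\ b_i\ge0\}$; with $g(x)=x\log x$ ($g(0)=0$), $\varphi(\mathbf b)=g(\gamma_{\mathbf b})+g(d/2-\gamma_{\mathbf b})-2g(\frac{d}{2k}-\beta_{\mathbf b})-g(1-\frac dk+\beta_{\mathbf b})-2\beta_{\mathbf b}\log\binom dk+\sum_i b_i\log\chi_i-\sum_i g(b_i)$. *)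

(* Defs.v *)
From HB Require Import structures.
From mathcomp Require Import all_boot all_order all_algebra.
From mathcomp Require Import all_classical all_reals all_analysis.
Set Implicit Arguments. Unset Strict Implicit. Unset Printing Implicit Defensive.
Import Order.TTheory GRing.Theory Num.Theory.
Import numFieldNormedType.Exports.
Local Open Scope ring_scope.

(* Vectors b = (b_0,...,b_{d-k}) are row vectors of size (d-k).+1 = d-k+1
   (we always have k < d in the theorem). Index i : 'I_(d-k).+1 is b_i. *)

Section Defs.
Variable R : realType.

Definition g (x : R) : R := if x == 0 then 0 else x * ln x.

Definition chi (d k i : nat) : R :=
  (d`!)%:R / ((k - i)`!%:R * (d - k - i)`!%:R * (i`!)%:R ^+ 2).

Definition bstar (d k : nat) : 'rV[R]_(d - k).+1 :=
  \row_(i < (d - k).+1)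
    ((d%:R / (2 * k%:R)) ^+ 2 / ('C(d, k)%:R ^+ 2) * chi d k i).

Definition betab (d k : nat) (b : 'rV[R]_(d - k).+1) : R :=
  \sum_(i < (d - k).+1) b 0 i.

Definition gammab (d k : nat) (b : 'rV[R]_(d - k).+1) : R :=
  \sum_(i < (d - k).+1) (k - i)%:R * b 0 i.

Definition Kset (d k : nat) : set 'rV[R]_(d - k).+1 :=
  [set b | ((d - k)%:R / k%:R <= betab b) && (betab b <= d%:R / (2 * k%:R))
           /\ forall i, 0 <= b 0 i].

Definition phi (d k : nat) (b : 'rV[R]_(d - k).+1) : R :=
  g (gammab b) + g (d%:R / 2 - gammab b)
  - 2 * g (d%:R / (2 * k%:R) - betab b)
  - g (1 - d%:R / k%:R + betab b)
  - 2 * betab b * ln ('C(d, k)%:R)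
  + \sum_(i < (d - k).+1) b 0 i * ln (chi d k i)
  - \sum_(i < (d - k).+1) g (b 0 i).

Definition hessian (n : nat) (f : 'rV[R]_n -> R) (x : 'rV[R]_n) : 'M[R]_n :=
  \matrix_(i < n, j < n)
     'D_(delta_mx 0 j) ('D_(delta_mx 0 i) f) x.

Definition neg_definite (n : nat) (H : 'M[R]_n) : Prop :=
  forall v : 'rV[R]_n, v != 0 -> (v *m H *m v^T) 0 0 < 0.

End Defs.

(* Main.v *)
Require Import Defs.
From HB Require Import structures.
From mathcomp Require Import all_boot all_order all_algebra.
From mathcomp Require Import all_classical all_reals all_analysis.
From mathcomp Require Import ring lra zify.
Import Order.TTheory GRing.Theory Num.Theory.
Import numFieldNormedType.Exports.
Local Open Scope ring_scope.

Section An.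
Context {R : realType}.

Lemma is_derive_ext (V : normedModType R) (f h : V -> R) (x v : V) df :
  (forall y, f y = h y) -> is_derive x v f df -> is_derive x v h df.
Proof. by move=> E; rewrite (_ : f = h) //; apply/funext. Qed.

Lemma is_derive_line n (f : 'rV[R]_n -> R) (x v : 'rV[R]_n) (df : R) :
  is_derive (0:R) 1 (fun t : R => f (t *: v + x)) df -> is_derive x v f df.
Proof.
move=> [d1 dv].
have E : (fun h : R => h^-1 *: ((f \o shift x) (h *: v) - f x)) =
   (fun h : R => h^-1 *: (((fun t => f (t *: v + x)) \o shift 0) (h *: 1)
                 - (fun t => f (t *: v + x)) 0)).
  by apply/funext => h /=; rewrite addr0 scale0r add0r [_%:A]mulr1.
apply: DeriveDef; first by apply/derivable1P.
by rewrite -dv /derive E.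
Qed.

Lemma is_derive_aff (a c : R) : is_derive (0:R) 1 (fun t : R => a + t * c) c.
Proof.
have H : is_derive (0:R) 1 (cst a + c \*: id) (0 + c *: 1)
  by apply: is_deriveD.
apply: is_derive_ext (is_derive_eq H _); last by rewrite add0r; exact: mulr1.
by move=> y; rewrite !fctE /cst; congr (_ + _); apply: mulrC.
Qed.

Lemma is_derive_compL {n} {G : R -> R} {L : 'rV[R]_n -> R} {x v : 'rV[R]_n} {c G' : R} :
  (forall t, L (t *: v + x) = L x + t * c) -> is_derive (L x) 1 G G' ->
  is_derive x v (fun y => G (L y)) (G' * c).
Proof.
move=> HL HG; apply: is_derive_line.
have HG' : is_derive (L x + 0 * c) 1 G G' by rewrite mul0r addr0.
have := @is_derive1_comp R G (fun t => L x + t * c) 0 G' c HG' (is_derive_aff (L x) c).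
by apply: is_derive_ext => t /=; rewrite HL.
Qed.

Lemma near_pos (a : R) : 0 < a -> \forall y \near a, 0 < y.
Proof. by move=> a0; apply: (@cvgr_gt R R (nbhs a) _ id a cvg_id 0 a0). Qed.

Lemma is_derive_g {a : R} : 0 < a -> is_derive a 1 (@g R) (ln a + 1).
Proof.
move=> a0.
apply: (@near_eq_is_derive _ _ _ (fun y : R => y * ln y) (@g R) a 1 (ln a + 1)).
  near=> y; rewrite /g ifF //; apply/negbTE; rewrite gt_eqF //.
  by near: y; exact: near_pos.
have H := is_deriveM (is_derive_id a 1) (is_derive1_ln a0).
apply: is_derive_ext (is_derive_eq H _) => //.
change (a * a^-1 + ln a * 1 = ln a + 1); by rewrite mulfV ?gt_eqF // mulr1 addrC.
Unshelve. all: by end_near. Qed.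

End An.

Section An2.
Variable R : realType.
Variables d k : nat.
Local Notation n := (d - k).+1.
Local Notation V := 'rV[R]_n.
Local Notation e i := (delta_mx 0 i : V).

Lemma isdD (f h : V -> R) x v df dh : is_derive x v f df -> is_derive x v h dh ->
  is_derive x v (fun y => f y + h y) (df + dh).
Proof. by move=> H1 H2; have := is_deriveD H1 H2. Qed.

Lemma isdB (f h : V -> R) x v df dh : is_derive x v f df -> is_derive x v h dh ->
  is_derive x v (fun y => f y - h y) (df - dh).
Proof. by move=> H1 H2; have := is_deriveB H1 H2. Qed.

Lemma isdM (f : V -> R) (c : R) x v df : is_derive x v f df ->
  is_derive x v (fun y => c * f y) (c * df).
Proof. by move=> H1; have := is_deriveZ c H1. Qed.

Arguments isdD {f h x v df dh}. Arguments isdB {f h x v df dh}.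
Arguments isdM {f} c {x v df}.

Lemma isd_sum m (h : 'I_m -> V -> R) x v dh : (forall j, is_derive x v (h j) (dh j)) ->
  is_derive x v (fun y => \sum_(j < m) h j y) (\sum_(j < m) dh j).
Proof.
move=> H; have := is_derive_sum H; apply: is_derive_ext => y.
by rewrite fct_sumE.
Qed.

Lemma isd_lin (p q a : R) : is_derive a 1 (fun z : R => p * z * q) (p * q).
Proof.
have H := is_deriveZ (p * q) (is_derive_id a (1:R)).
apply: is_derive_ext (is_derive_eq H _); last by change ((p * q) * 1 = p * q); rewrite mulr1.
by move=> z; change (p * q * z = p * z * q); rewrite -!mulrA [q * z]mulrC.
Qed.


Lemma line_entry (x : V) i j t : (t *: e i + x) 0 j = x 0 j + t * (i == j)%:R.
Proof. by rewrite !mxE eqxx /= eq_sym addrC. Qed.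

Lemma line_beta (x : V) i t : @betab R d k (t *: e i + x) = betab x + t * 1.
Proof.
rewrite /betab; under eq_bigr do rewrite line_entry.
rewrite big_split /= -mulr_sumr; congr (_ + t * _).
rewrite (bigD1 i) //= eqxx big1 ?addr0 //.
by move=> j /negbTE; rewrite eq_sym => ->.
Qed.

Lemma line_gamma (x : V) i t : @gammab R d k (t *: e i + x) = gammab x + t * (k - i)%:R.
Proof.
rewrite /gammab; under eq_bigr do rewrite line_entry mulrDr.
rewrite big_split /=; congr (_ + _).
rewrite (bigD1 i) //= eqxx big1 ?addr0; last first.
  by move=> j /negbTE; rewrite eq_sym => ->; rewrite !mulr0.
by rewrite mulr1 mulrC.
Qed.


Lemma isd_mulc (w a : R) : is_derive a 1 (fun z : R => z * w) w.
Proof.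
have := isd_lin 1 w a; rewrite mul1r; apply: is_derive_ext => z.
by rewrite mul1r.
Qed.

Lemma sum_delta (a : 'I_n -> R) i : \sum_(j < n) a j * (i == j)%:R = a i.
Proof.
rewrite (bigD1 i) //= eqxx mulr1 big1 ?addr0 //.
by move=> j /negbTE; rewrite eq_sym => ->; rewrite mulr0.
Qed.

Definition cc := d%:R / (2 * k%:R) : R.
Definition ee := 1 - d%:R / k%:R : R.
Definition uu (i : 'I_n) : R := (k - i)%:R.

Definition Pos (x : V) := [/\ 0 < @gammab R d k x, 0 < d%:R / 2 - gammab x,
  0 < cc - betab x, 0 < ee + betab x & forall j, 0 < x 0 j].

Definition F1 (x : V) (i : 'I_n) : R :=
  (ln (gammab x) + 1) * uu i - (ln (d%:R / 2 - gammab x) + 1) * uu i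
  + 2 * (ln (cc - betab x) + 1) - (ln (ee + betab x) + 1)
  - 2 * ln ('C(d, k)%:R) + ln (chi R d k i) - (ln (x 0 i) + 1).

Lemma is_derive_phi (x : V) i : Pos x -> is_derive x (e i) (@phi R d k) (F1 x i).
Proof.
case=> P1 P2 P3 P4 P5.
have T1 := is_derive_compL (line_gamma x i) (is_derive_g P1).
have T2 : is_derive x (e i) (fun y => g (d%:R / 2 - @gammab R d k y)) ((ln (d%:R / 2 - gammab x) + 1) * (- uu i)).
  apply: (is_derive_compL _ (is_derive_g P2)) => t.
  by rewrite line_gamma /uu; ring.
have T3 : is_derive x (e i) (fun y => g (cc - @betab R d k y)) ((ln (cc - betab x) + 1) * (- 1)).
  apply: (is_derive_compL _ (is_derive_g P3)) => t.
  by rewrite line_beta; ring.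
have T4 : is_derive x (e i) (fun y => g (ee + @betab R d k y)) ((ln (ee + betab x) + 1) * 1).
  apply: (is_derive_compL _ (is_derive_g P4)) => t.
  by rewrite line_beta; ring.
have T5 := is_derive_compL (line_beta x i) (isd_lin 2 (ln ('C(d, k)%:R)) (betab x)).
have T6 : is_derive x (e i) (fun y : V => \sum_(j < n) y 0 j * ln (chi R d k j))
   (\sum_(j < n) ln (chi R d k j) * (i == j)%:R).
  apply: isd_sum => j.
  exact: (is_derive_compL (fun t => line_entry x i j t) (isd_mulc _ _)).
have T7 : is_derive x (e i) (fun y : V => \sum_(j < n) g (y 0 j))
   (\sum_(j < n) (ln (x 0 j) + 1) * (i == j)%:R).
  apply: isd_sum => j.
  exact: (is_derive_compL (fun t => line_entry x i j t) (is_derive_g (P5 j))).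
have H := isdB (isdD (isdB (isdB (isdB (isdD T1 T2) (isdM 2 T3)) T4) T5) T6) T7.
apply: is_derive_ext (is_derive_eq H _) => //.
rewrite !sum_delta /F1; ring.
Qed.

Lemma cont_lin (w : 'I_n -> R) : continuous (fun y : V => \sum_(j < n) w j * y 0 j).
Proof.
move=> y.
apply: (@cvg_big R _ +%R 0 xpredT add_continuous _ (nbhs y) (index_enum _)
   (fun j y => w j * y 0 j) (fun j => w j * y 0 j) _).
move=> j _.
apply: cvgM; first exact: cvg_cst.
exact: coord_continuous.
Qed.


Lemma cont_beta : continuous (@betab R d k).
Proof.
have -> : @betab R d k = (fun y : V => \sum_(j < n) 1 * y 0 j).
  by apply/funext => y; rewrite /betab; apply: eq_bigr => j _; rewrite mul1r.
exact: cont_lin.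
Qed.

Lemma cont_gamma : continuous (@gammab R d k).
Proof. exact: (cont_lin uu). Qed.

Lemma near_Pos (x : V) : Pos x -> \forall y \near x, Pos y.
Proof.
case=> P1 P2 P3 P4 P5.
have N1 := cvgr_gt _ (cont_gamma x) 0 P1.
have N2 := @cvgr_lt R _ _ _ _ _ (cont_gamma x) (d%:R / 2) ltac:(by rewrite -subr_gt0).
have N3 := @cvgr_lt R _ _ _ _ _ (cont_beta x) cc ltac:(by rewrite -subr_gt0).
have N4 := cvgr_gt _ (cont_beta x) (- ee) ltac:(by rewrite -subr_gt0 opprK addrC).
have N5 : \forall y \near x, forall j, 0 < (y : V) 0 j.
  apply: (@filter_forall V _ (fun j (y : V) => 0 < y 0 j) (nbhs x) _) => j.
  exact: (cvgr_gt _ (@coord_continuous R 1 n 0 j x) 0 (P5 j)).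
near=> y; split.
- by near: y; apply: N1; exact: nbhs_filter.
- by rewrite subr_gt0; near: y; apply: N2; exact: nbhs_filter.
- by rewrite subr_gt0; near: y; apply: N3; exact: nbhs_filter.
- by rewrite -[ee]opprK addrC subr_gt0; near: y; apply: N4; exact: nbhs_filter.
- by near: y.
Unshelve. all: by end_near. Qed.

Lemma isdMr (f : V -> R) (c : R) x v df : is_derive x v f df ->
  is_derive x v (fun y => f y * c) (df * c).
Proof.
move=> H; have := isdM c H; rewrite mulrC; apply: is_derive_ext => y.
by rewrite mulrC.
Qed.

Arguments isdMr {f} c {x v df}.

Lemma isdc (c : R) (x v : V) : is_derive x v (fun _ => c) 0.
Proof. exact: is_derive_cst. Qed.

Definition Hval (x : V) (i j : 'I_n) : R :=
  uu i * uu j * ((gammab x)^-1 + (d%:R / 2 - gammab x)^-1)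
  - (2 * (cc - betab x)^-1 + (ee + betab x)^-1) - (i == j)%:R / x 0 i.

Lemma is_derive_F1 (x : V) i j : Pos x -> is_derive x (e j) (fun y => F1 y i) (Hval x i j).
Proof.
case=> P1 P2 P3 P4 P5.
have L1 := isdMr (uu i) (isdD (is_derive_compL (line_gamma x j) (is_derive1_ln P1)) (isdc 1 x (e j))).
have L2 : is_derive x (e j) (fun y => (ln (d%:R / 2 - @gammab R d k y) + 1) * uu i)
   (((d%:R / 2 - gammab x)^-1 * (- uu j) + 0) * uu i).
  apply: isdMr; apply: isdD (isdc 1 x (e j)).
  apply: (is_derive_compL _ (is_derive1_ln P2)) => t.
  by rewrite line_gamma /uu; ring.
have L3 : is_derive x (e j) (fun y => 2 * (ln (cc - @betab R d k y) + 1))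
   (2 * ((cc - betab x)^-1 * (- 1) + 0)).
  apply: isdM; apply: isdD (isdc 1 x (e j)).
  apply: (is_derive_compL _ (is_derive1_ln P3)) => t.
  by rewrite line_beta; ring.
have L4 : is_derive x (e j) (fun y => ln (ee + @betab R d k y) + 1)
   ((ee + betab x)^-1 * 1 + 0).
  apply: isdD (isdc 1 x (e j)).
  apply: (is_derive_compL _ (is_derive1_ln P4)) => t.
  by rewrite line_beta; ring.
have L7 := isdD (@is_derive_compL _ _ (@ln R) (fun y : V => y 0 i) x (e j) _ _ (fun t => line_entry x j i t) (is_derive1_ln (P5 i))) (isdc 1 x (e j)).
have H := isdB (isdD (isdB (isdB (isdD (isdB L1 L2) L3) L4) (isdc (2 * ln ('C(d, k)%:R)) x (e j)))
   (isdc (ln (chi R d k i)) x (e j))) L7.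
apply: is_derive_ext (is_derive_eq H _) => //.
rewrite /Hval eq_sym; ring.
Qed.


Lemma hessian_entry (x : V) : Pos x ->
  hessian (@phi R d k) x = \matrix_(i, j) Hval x i j.
Proof.
move=> Px; apply/matrixP => i j; rewrite !mxE.
rewrite (@near_eq_derive _ _ _ _ (fun y => F1 y i)).
  by have [_ ->] := is_derive_F1 x i j Px.
have := near_Pos x Px; apply: filterS => y Py.
by have [_ ->] := is_derive_phi y i Py.
Qed.

End An2.

Section Alg.
Variable R : realFieldType.

Lemma sylvester n m (A : 'M[R]_(n, m)) (B : 'M[R]_(m, n)) :
  \det (1%:M + A *m B) = \det (1%:M + B *m A).
Proof.
have E1 : block_mx 1%:M (- A) B 1%:M =
  block_mx 1%:M 0 B 1%:M *m block_mx 1%:M (- A) 0 (1%:M + B *m A).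
  by rewrite mulmx_block !mulmx1 !mul1mx !mul0mx ?mulmx0 !addr0 mulmxN addrCA addNr addr0.
have E2 : block_mx 1%:M (- A) B 1%:M =
  block_mx (1%:M + A *m B) (- A) 0 1%:M *m block_mx 1%:M 0 B 1%:M.
  by rewrite mulmx_block !mulmx1 !mul1mx !mul0mx ?mulmx0 mulNmx addrK !add0r.
have := congr1 determinant E1; rewrite E2 !det_mulmx.
by rewrite !det_ublock !det_lblock !det1 !mul1r !mulr1.
Qed.

Lemma det22 (M : 'M[R]_2) : \det M = M 0 0 * M 1 1 - M 0 1 * M 1 0.
Proof.
rewrite (expand_det_row _ 0) !big_ord_recl big_ord0 addr0 /cofactor !det_mx11.
rewrite !mxE.
have E1 : M (lift 0 0) (lift ord0 0) = M 1 1 by congr (M _ _); apply: val_inj.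
have E2 : M (lift 0 0) (lift (lift ord0 ord0) 0) = M 1 0 by congr (M _ _); apply: val_inj.
have E3 : M 0 (lift ord0 ord0) = M 0 1 by congr (M _ _); apply: val_inj.
have E4 : M 0 ord0 = M 0 0 by congr (M _ _); apply: val_inj.
rewrite E1 E2 E3 E4 /= expr0 expr1 mul1r mulN1r; ring.
Qed.


Lemma det_struct n (b u : 'I_n -> R) (al de : R) : (forall i, b i != 0) ->
  \det (\matrix_(i, j) ((i == j)%:R / b i + de - al * u i * u j)) =
  (\prod_i (b i)^-1) * ((1 + de * \sum_i b i) * (1 - al * \sum_i u i ^+ 2 * b i)
     + al * de * (\sum_i u i * b i) ^+ 2).
Proof.
move=> bn0.
pose A := \matrix_(i < n, j < 2) (b i * (if j == 0 then 1 else u i)).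
pose B := \matrix_(j < 2, l < n) (if j == 0 then de else - al * u l).
have -> : \matrix_(i, j) ((i == j)%:R / b i + de - al * u i * u j) =
    diag_mx (\row_i (b i)^-1) *m (1%:M + A *m B).
  apply/matrixP => i j; rewrite mul_diag_mx !mxE big_ord_recl big_ord1 !mxE /=.
  rewrite -[(i == j)%:R / b i]mulrC; field; exact: bn0.
rewrite det_mulmx det_diag sylvester det22; congr (_ * _).
  by apply: eq_bigr => i _; rewrite mxE.
rewrite !mxE /=.
have S00 : \sum_j B 0 j * A j 0 = de * \sum_i b i.
  by rewrite mulr_sumr; apply: eq_bigr => l _; rewrite !mxE /= mulr1.
have S01 : \sum_j B 0 j * A j 1 = de * \sum_i u i * b i.
  by rewrite mulr_sumr; apply: eq_bigr => l _; rewrite !mxE /=; ring.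
have S10 : \sum_j B 1 j * A j 0 = - al * \sum_i u i * b i.
  by rewrite mulr_sumr; apply: eq_bigr => l _; rewrite !mxE /=; ring.
have S11 : \sum_j B 1 j * A j 1 = - al * \sum_i u i ^+ 2 * b i.
  by rewrite mulr_sumr; apply: eq_bigr => l _; rewrite !mxE /=; ring.
by rewrite S00 S01 S10 S11; ring.
Qed.


Lemma quad_pos (a h c s t : R) : 0 < a -> 0 < a * c - h ^+ 2 -> (s != 0) || (t != 0) ->
  0 < a * s ^+ 2 + 2 * h * s * t + c * t ^+ 2.
Proof.
move=> a0 D0 st.
have E : a * (a * s ^+ 2 + 2 * h * s * t + c * t ^+ 2) =
   (a * s + h * t) ^+ 2 + (a * c - h ^+ 2) * t ^+ 2 by ring.
rewrite -(pmulr_rgt0 _ a0) E.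
have [t0|t0] := eqVneq t 0.
  move: st; rewrite t0 eqxx orbF => s0.
  have -> : (a * s + h * 0) ^+ 2 + (a * c - h ^+ 2) * 0 ^+ 2 = a ^+ 2 * s ^+ 2 by ring.
  by apply: mulr_gt0; [exact: exprn_gt0 | rewrite lt0r sqrf_eq0 s0 sqr_ge0].
apply: ltr_wpDl; first exact: sqr_ge0.
by rewrite mulr_gt0 // lt0r sqrf_eq0 t0 sqr_ge0.
Qed.

Lemma sum_pos_sq n (b v : 'I_n -> R) : (forall i, 0 < b i) -> (exists i, v i != 0) ->
  0 < \sum_i v i ^+ 2 / b i.
Proof.
move=> bp [j vj].
rewrite (bigD1 j) //=; apply: ltr_wpDr.
  by apply: sumr_ge0 => i _; rewrite divr_ge0 ?sqr_ge0 // ltW.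
by rewrite divr_gt0 // lt0r sqrf_eq0 vj sqr_ge0.
Qed.


Lemma negdef_key n (b u v : 'I_n -> R) (al de : R) :
  (forall i, 0 < b i) -> (exists i, v i != 0) ->
  let be := \sum_i b i in let ga := \sum_i u i * b i in
  let S2 := \sum_i u i ^+ 2 * b i in
  let D := be * S2 - ga ^+ 2 in
  0 < D -> 0 < S2 + de * D ->
  0 < (1 + de * be) * (1 - al * S2) + al * de * ga ^+ 2 ->
  0 < \sum_i v i ^+ 2 / b i - al * (\sum_i u i * v i) ^+ 2 + de * (\sum_i v i) ^+ 2.
Proof.
move=> bp vn0 be ga S2 D D0 a0 br.
set q := \sum_i v i ^+ 2 / b i; set s := \sum_i v i; set t := \sum_i u i * v i.
have q0 : 0 < q := @sum_pos_sq n b v bp vn0.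
have [st|st] := boolP ((s != 0) || (t != 0)); last first.
  move: st; rewrite negb_or !negbK => /andP[/eqP -> /eqP ->].
  by rewrite expr0n /= !mulr0 subr0 addr0.
set lam := S2 * s - ga * t; set mu := - ga * s + be * t.
have Er : \sum_i (D * v i - b i * (lam + mu * u i)) ^+ 2 / b i =
   D ^+ 2 * q - 2 * D * (lam * s + mu * t) + (lam ^+ 2 * be + 2 * lam * mu * ga + mu ^+ 2 * S2).
  have -> : \sum_i (D * v i - b i * (lam + mu * u i)) ^+ 2 / b i =
    \sum_i (D ^+ 2 * (v i ^+ 2 / b i) + (- (2 * D * lam)) * v i + (- (2 * D * mu)) * (u i * v i)
      + lam ^+ 2 * b i + (2 * lam * mu) * (u i * b i) + mu ^+ 2 * (u i ^+ 2 * b i)).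
    apply: eq_bigr => i _; field.
    by rewrite gt_eqF.
  rewrite !big_split /= -!mulr_sumr /q /s /t /be /ga /S2; ring.
have R0 : 0 <= \sum_i (D * v i - b i * (lam + mu * u i)) ^+ 2 / b i.
  by apply: sumr_ge0 => i _; rewrite divr_ge0 ?sqr_ge0 // ltW.
have P0 : 0 < (S2 + de * D) * s ^+ 2 + 2 * (- ga) * s * t + (be - al * D) * t ^+ 2.
  apply: quad_pos => //.
  have -> : (S2 + de * D) * (be - al * D) - (- ga) ^+ 2 =
    D * ((1 + de * be) * (1 - al * S2) + al * de * ga ^+ 2) by rewrite /D; ring.
  exact: mulr_gt0.
rewrite -(pmulr_rgt0 _ (exprn_gt0 2 D0)).
have -> : D ^+ 2 * (q - al * t ^+ 2 + de * s ^+ 2) =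
  D * ((S2 + de * D) * s ^+ 2 + 2 * (- ga) * s * t + (be - al * D) * t ^+ 2)
  + \sum_i (D * v i - b i * (lam + mu * u i)) ^+ 2 / b i.
  by rewrite Er /lam /mu /D; ring.
by apply: ltr_wpDr => //; exact: mulr_gt0.
Qed.


Lemma sum_delta' n (a : 'I_n -> R) j : \sum_(i < n) a i * (i == j)%:R = a j.
Proof.
rewrite (bigD1 j) //= eqxx mulr1 big1 ?addr0 //.
by move=> i /negbTE ->; rewrite mulr0.
Qed.

Lemma quad_struct n (b u : 'I_n -> R) al de (v : 'rV[R]_n) : (forall i, b i != 0) ->
  (v *m \matrix_(i, j) (al * u i * u j - de - (i == j)%:R / b i) *m v^T) 0 0
  = - (\sum_i v 0 i ^+ 2 / b i - al * (\sum_i u i * v 0 i) ^+ 2 + de * (\sum_i v 0 i) ^+ 2).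
Proof.
move=> bn0.
have E : forall j, \sum_i v 0 i * (\matrix_(i, j) (al * u i * u j - de - (i == j)%:R / b i)) i j
   = al * u j * (\sum_i u i * v 0 i) - de * (\sum_i v 0 i) - v 0 j / b j.
  move=> j.
  have -> : \sum_i v 0 i * (\matrix_(i, j) (al * u i * u j - de - (i == j)%:R / b i)) i j =
     \sum_i ((al * u j) * (u i * v 0 i) + (- de) * v 0 i + (- (v 0 i / b i)) * (i == j)%:R).
    by apply: eq_bigr => i _; rewrite mxE; ring.
  by rewrite !big_split /= -!mulr_sumr sum_delta'; ring.
rewrite mxE.
under eq_bigr do rewrite mxE E mxE.
have -> : \sum_j (al * u j * (\sum_i u i * v 0 i) - de * (\sum_i v 0 i) - v 0 j / b j) * v 0 j
  = \sum_j ((al * (\sum_i u i * v 0 i)) * (u j * v 0 j) + (- de * (\sum_i v 0 i)) * v 0 j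
      + (- 1) * (v 0 j ^+ 2 / b j)).
  by apply: eq_bigr => j _; ring.
by rewrite !big_split /= -!mulr_sumr; ring.
Qed.

End Alg.
Local Open Scope nat_scope.

Lemma sum_ext0 (f : nat -> nat) a N : a <= N -> (forall i, a <= i < N -> f i = 0) ->
  \sum_(i < a) f i = \sum_(i < N) f i.
Proof.
move=> aN f0; rewrite -(big_mkord xpredT f) -(big_mkord xpredT f).
rewrite [RHS](big_cat_nat (leq0n a) aN) /=.
have -> : \sum_(a <= i < N) f i = 0.
  rewrite big_nat_cond big1 //.
  by move=> i /andP[/andP[H1 H2] _]; apply: f0; rewrite H1 H2.
by rewrite addn0.
Qed.

Lemma VdM' m l : \sum_(i < l.+1) 'C(m, i) * 'C(l, i) = 'C(m + l, m).
Proof.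
rewrite addnC -(binomial.Vandermonde l m m).
transitivity (\sum_(i < (m + l).+1) 'C(m, i) * 'C(l, i)).
  apply: (@sum_ext0 (fun i => 'C(m, i) * 'C(l, i))); first by lia.
  by move=> i /andP[li _]; rewrite (bin_small li) muln0.
transitivity (\sum_(j < m.+1) 'C(m, j) * 'C(l, j)).
  symmetry; apply: (@sum_ext0 (fun i => 'C(m, i) * 'C(l, i))); first by lia.
  by move=> i /andP[li _]; rewrite (bin_small li) mul0n.
apply: eq_bigr => j _; rewrite mulnC bin_sub //.
by rewrite -ltnS.
Qed.

Section Comb.
Variables d k : nat.
Hypothesis kd : k < d.
Hypothesis dk : d < 2 * k.

Lemma N1 : \sum_(i < (d - k).+1) 'C(k, i) * 'C(d - k, i) = 'C(d, k).
Proof. by rewrite VdM' subnKC // ltnW. Qed.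

Lemma N2 : \sum_(i < (d - k).+1) (k - i) * ('C(k, i) * 'C(d - k, i)) = k * 'C(d.-1, k.-1).
Proof.
rewrite -(_ : k.-1 + (d - k) = d.-1); last by lia.
rewrite -VdM' big_distrr /=; apply: eq_bigr => i _.
by rewrite mulnA -mul_bin_down mulnA.
Qed.

Lemma N3 : \sum_(i < (d - k).+1) (k - i) ^ 2 * ('C(k, i) * 'C(d - k, i)) =
  k * k.-1 * 'C(d.-2, k.-2) + k * 'C(d.-1, k.-1).
Proof.
rewrite -(_ : k.-2 + (d - k) = d.-2); last by lia.
rewrite -(_ : k.-1 + (d - k) = d.-1); last by lia.
rewrite -!VdM' !big_distrr -big_split /=; apply: eq_bigr => i _.
have ik : i < k by have := ltn_ord i; lia.
have E : (k - i) ^ 2 * 'C(k, i) = k * k.-1 * 'C(k.-2, i) + k * 'C(k.-1, i).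
  rewrite expnS expn1 -mulnA -mul_bin_down.
  have -> : k - i = (k.-1 - i).+1 by lia.
  rewrite mulSn addnC; congr (_ + _).
  by rewrite mulnCA -mul_bin_down mulnA.
by rewrite mulnA E mulnDl !mulnA.
Qed.

Lemma N4 : d * 'C(d.-1, k.-1) = k * 'C(d, k).
Proof. by rewrite (_ : k = (k.-1).+1) ?mul_bin_diag //; lia. Qed.

Lemma N5 : d.-1 * 'C(d.-2, k.-2) = k.-1 * 'C(d.-1, k.-1).
Proof. by rewrite (_ : k.-1 = (k.-2).+1) ?mul_bin_diag //; lia. Qed.

End Comb.

Local Open Scope ring_scope.

Section Vals.
Variable R : realType.
Variables d k : nat.
Hypothesis kd : (k < d)%N.
Hypothesis dk : (d < 2 * k)%N.
Local Notation n := (d - k).+1.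

Lemma fact_id (i : 'I_n) :
  ('C(d, k) * ('C(k, i) * 'C(d - k, i)) * ((k - i)`! * (d - k - i)`! * (i`! ^ 2)))%N = d`!.
Proof.
have ik : (i <= k)%N by have := ltn_ord i; lia.
have idk : (i <= d - k)%N by have := ltn_ord i; rewrite ltnS.
rewrite -(bin_fact (ltnW kd)) -{1}(bin_fact ik) -(bin_fact idk).
ring.
Qed.


Lemma chiE (i : 'I_n) : chi R d k i = ('C(d, k) * ('C(k, i) * 'C(d - k, i)))%:R.
Proof.
rewrite /chi -(fact_id i) natrM -!natrM -natrX -!natrM [X in X / _]natrM mulfK //.
Qed.

Definition cc' : R := d%:R / (2 * k%:R).

Lemma bstarE (i : 'I_n) : bstar R d k 0 i =
  cc' ^+ 2 / 'C(d, k)%:R * ('C(k, i) * 'C(d - k, i))%:R.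
Proof.
have lemC0 : 'C(d, k)%:R != 0 :> R by rewrite pnatr_eq0 -lt0n bin_gt0 ltnW.
have lemk0 : k%:R != 0 :> R by rewrite pnatr_eq0 -lt0n; lia.
rewrite /bstar mxE chiE natrM /cc'; field.
by rewrite lemC0 lemk0.
Qed.


Lemma lemC0 : 'C(d, k)%:R != 0 :> R.
Proof. by rewrite pnatr_eq0 -lt0n bin_gt0 ltnW. Qed.
Lemma lemk0 : k%:R != 0 :> R.
Proof. by rewrite pnatr_eq0 -lt0n; lia. Qed.
Lemma lemd0 : d%:R != 0 :> R.
Proof. by rewrite pnatr_eq0 -lt0n; lia. Qed.

Lemma sum_b : \sum_(i < n) bstar R d k 0 i = cc' ^+ 2.
Proof.
under eq_bigr do rewrite bstarE.
rewrite -mulr_sumr -natr_sum N1 // mulfVK //; exact: lemC0.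
Qed.

Lemma sum_ub : \sum_(i < n) (k - i)%:R * bstar R d k 0 i = d%:R / 4.
Proof.
have E : \sum_(i < n) (k - i)%:R * bstar R d k 0 i =
   cc' ^+ 2 / 'C(d, k)%:R * (k * 'C(d.-1, k.-1))%:R.
  under eq_bigr do rewrite bstarE mulrCA -natrM.
  by rewrite -mulr_sumr -natr_sum N2.
have N4R : d%:R * 'C(d.-1, k.-1)%:R = k%:R * 'C(d, k)%:R :> R.
  by rewrite -!natrM N4.
rewrite E natrM /cc'.
have -> : 'C(d.-1, k.-1)%:R = k%:R * 'C(d, k)%:R / d%:R :> R.
  by rewrite -N4R; field; exact: lemd0.
field; by rewrite lemC0 lemk0 lemd0.
Qed.


Lemma lemd1 : d%:R - 1 != 0 :> R.
Proof. by rewrite subr_eq0 pnatr_eq1; lia. Qed.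

Lemma sum_u2b : \sum_(i < n) (k - i)%:R ^+ 2 * bstar R d k 0 i =
  d%:R * ((k%:R - 1) ^+ 2 + d%:R - 1) / (4 * (d%:R - 1)).
Proof.
have E : \sum_(i < n) (k - i)%:R ^+ 2 * bstar R d k 0 i =
   cc' ^+ 2 / 'C(d, k)%:R * (k * k.-1 * 'C(d.-2, k.-2) + k * 'C(d.-1, k.-1))%:R.
  under eq_bigr do rewrite bstarE mulrCA -natrX -natrM.
  by rewrite -mulr_sumr -natr_sum N3.
have N4R : d%:R * 'C(d.-1, k.-1)%:R = k%:R * 'C(d, k)%:R :> R.
  by rewrite -!natrM N4.
have N5R : (d.-1)%:R * 'C(d.-2, k.-2)%:R = (k.-1)%:R * 'C(d.-1, k.-1)%:R :> R.
  by rewrite -!natrM N5.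
have kp : (k.-1)%:R = k%:R - 1 :> R by rewrite -subn1 natrB //; lia.
have dp : (d.-1)%:R = d%:R - 1 :> R by rewrite -subn1 natrB //; lia.
rewrite kp dp in N5R.
have e1 : 'C(d.-1, k.-1)%:R = k%:R * 'C(d, k)%:R / d%:R :> R.
  by rewrite -N4R; field; exact: lemd0.
have e2 : 'C(d.-2, k.-2)%:R = (k%:R - 1) * 'C(d.-1, k.-1)%:R / (d%:R - 1) :> R.
  by rewrite -N5R; field; exact: lemd1.
rewrite E natrD !natrM kp e2 e1 /cc'.
field; by rewrite lemC0 lemk0 lemd0 lemd1.
Qed.

Lemma bstar_pos (i : 'I_n) : 0 < bstar R d k 0 i.
Proof.
rewrite bstarE; apply: mulr_gt0; last first.
  rewrite ltr0n muln_gt0 !bin_gt0; have := ltn_ord i; lia.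
apply: divr_gt0; last by rewrite ltr0n bin_gt0 ltnW.
apply: exprn_gt0; apply: divr_gt0; first by rewrite ltr0n; lia.
by rewrite mulr_gt0 // ltr0n; lia.
Qed.

Lemma kR : 0 < k%:R :> R. Proof. by rewrite ltr0n; lia. Qed.
Lemma dR : 0 < d%:R :> R. Proof. by rewrite ltr0n; lia. Qed.
Lemma kdR : k%:R < d%:R :> R. Proof. by rewrite ltr_nat. Qed.
Lemma dkR : d%:R < 2 * k%:R :> R. Proof. by rewrite -natrM ltr_nat. Qed.
Lemma d1R : 1 < d%:R :> R. Proof. by rewrite ltr1n; lia. Qed.

Lemma cc_pos : 0 < cc'. 
Proof. by rewrite /cc' divr_gt0 ?dR // mulr_gt0 ?kR. Qed.
Lemma cc_lt1 : cc' < 1.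
Proof. by rewrite /cc' ltr_pdivrMr ?mul1r ?dkR // mulr_gt0 ?kR. Qed.

Lemma ee_cc : @ee R d k + cc' ^+ 2 = (1 - cc') ^+ 2.
Proof. rewrite /ee /cc'; field; exact: lemk0. Qed.

Definition S2v : R := d%:R * ((k%:R - 1) ^+ 2 + d%:R - 1) / (4 * (d%:R - 1)).
Definition alv : R := (d%:R / 4)^-1 + (d%:R / 2 - d%:R / 4)^-1.
Definition dev : R := 2 * (cc' - cc' ^+ 2)^-1 + (@ee R d k + cc' ^+ 2)^-1.

Lemma bracket_val : (1 + dev * cc' ^+ 2) * (1 - alv * S2v) + alv * dev * (d%:R / 4) ^+ 2 =
  2 * k%:R ^+ 2 / ((d%:R - 1) * (2 * k%:R - d%:R) ^+ 2)
    * (4 * k%:R - d%:R - 2 - (2 * k%:R - d%:R) ^+ 2).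
Proof.
rewrite /dev ee_cc /alv /S2v /cc'.
have := kR; have := dR; have := dkR; have := d1R => h1 h2 h3 h4.
field.
rewrite !(gt_eqF, lt_eqF) //=; try lra.
by rewrite -mulrBr mulr_gt0 // subr_gt0.
Qed.

Lemma D_pos : 0 < cc' ^+ 2 * S2v - (d%:R / 4) ^+ 2.
Proof.
have := kR; have := dR; have := dkR; have := d1R; have := kdR => h0 h1 h2 h3 h4.
have -> : cc' ^+ 2 * S2v - (d%:R / 4) ^+ 2 =
    d%:R ^+ 2 * (d%:R - k%:R) ^+ 2 / (16 * k%:R ^+ 2 * (d%:R - 1)).
  rewrite /cc' /S2v; field.
  by rewrite !(gt_eqF, lt_eqF) //=; try lra.
apply: divr_gt0; first by apply: mulr_gt0; apply: exprn_gt0; lra.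
by apply: mulr_gt0; [apply: mulr_gt0 => //; apply: exprn_gt0 | lra].
Qed.

Lemma S2_pos : 0 < S2v.
Proof.
have := dR; have := d1R => h1 h2.
rewrite /S2v; apply: divr_gt0; last lra.
apply: mulr_gt0 => //; have := sqr_ge0 (k%:R - 1 : R); lra.
Qed.

Lemma de_pos : 0 < dev.
Proof.
have := cc_pos; have := cc_lt1 => h1 h2.
rewrite /dev ee_cc; apply: addr_gt0.
  have -> : cc' - cc' ^+ 2 = cc' * (1 - cc') by ring.
  by apply: mulr_gt0 => //; rewrite invr_gt0 mulr_gt0 // subr_gt0.
by rewrite invr_gt0 exprn_gt0 // subr_gt0.
Qed.

Lemma main_in : (2 * k%:R - d%:R) ^+ 2 < 4 * k%:R - d%:R - 2 :> R ->
  let Hs := hessian (@phi R d k) (bstar R d k) in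
  \det (- Hs) =
    2 * k%:R ^+ 2 / ((d%:R - 1) * (2 * k%:R - d%:R) ^+ 2)
    * (4 * k%:R - d%:R - 2 - (2 * k%:R - d%:R) ^+ 2)
    * \prod_(i < (d - k).+1) (bstar R d k 0 i)^-1
  /\ 0 < \det (- Hs)
  /\ ((bstar R d k \in @Kset R d k /\
       forall b, b \in @Kset R d k -> b != bstar R d k ->
                 @phi R d k b < @phi R d k (bstar R d k)) ->
      neg_definite Hs).
Proof.
move=> hyp Hs.
have gb : gammab (bstar R d k) = d%:R / 4 by exact: sum_ub.
have bb : betab (bstar R d k) = cc' ^+ 2 by exact: sum_b.
have cp := cc_pos; have c1 := cc_lt1; have dp := dR.
have Pb : Pos R d k (bstar R d k).
  split.
  - by rewrite gb; lra.
  - by rewrite gb; lra.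
  - rewrite bb; change (0 < cc' - cc' ^+ 2).
    have -> : cc' - cc' ^+ 2 = cc' * (1 - cc') by ring.
    by rewrite mulr_gt0 // subr_gt0.
  - by rewrite bb ee_cc exprn_gt0 // subr_gt0.
  - exact: bstar_pos.
have HE : Hs = \matrix_(i, j) (alv * uu R d k i * uu R d k j - dev
                                - (i == j)%:R / bstar R d k 0 i).
  rewrite /Hs hessian_entry //; apply/matrixP => i j.
  rewrite [LHS]mxE [RHS]mxE /Hval gb bb /alv /dev /cc /cc'; ring.
have HN : - Hs = \matrix_(i, j) ((i == j)%:R / bstar R d k 0 i + dev
                                - alv * uu R d k i * uu R d k j).
  by rewrite HE; apply/matrixP => i j; rewrite !mxE; ring.
have bn0 : forall i, bstar R d k 0 i != 0 by move=> i; rewrite gt_eqF // bstar_pos.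
have Hdet : \det (- Hs) = \prod_i (bstar R d k 0 i)^-1 *
   (2 * k%:R ^+ 2 / ((d%:R - 1) * (2 * k%:R - d%:R) ^+ 2)
    * (4 * k%:R - d%:R - 2 - (2 * k%:R - d%:R) ^+ 2)).
  rewrite HN det_struct // -bracket_val sum_b /uu sum_ub sum_u2b //.
split; first by rewrite Hdet mulrC.
split.
  rewrite Hdet; apply: mulr_gt0.
    by apply: prodr_gt0 => i _; rewrite invr_gt0 bstar_pos.
  have := kR; have := d1R; have := dkR => h1 h2 h3.
  apply: mulr_gt0; last by lra.
  apply: divr_gt0; first by apply: mulr_gt0 => //; exact: exprn_gt0.
  by apply: mulr_gt0; [lra | apply: exprn_gt0; lra].
move=> _ v vn0.
have [i vi] : exists i, v 0 i != 0.
  apply/existsP; move: vn0; apply: contraNT; rewrite negb_exists => /forallP H.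
  apply/eqP/matrixP => a j; rewrite (ord1 a) mxE.
  by move: (H j); rewrite negbK => /eqP.
rewrite HE quad_struct // oppr_lt0.
have K := @negdef_key R n (fun i => bstar R d k 0 i) (uu R d k) (fun i => v 0 i) alv dev
   bstar_pos (ex_intro _ i vi).
cbv beta zeta in K.
rewrite sum_b /uu sum_ub sum_u2b -/S2v in K.
apply: K.
- exact: D_pos.
- by apply: addr_gt0; [exact: S2_pos | apply: mulr_gt0; [exact: de_pos | exact: D_pos]].
- rewrite bracket_val.
  have := kR; have := d1R; have := dkR => h1 h2 h3.
  apply: mulr_gt0; last by lra.
  apply: divr_gt0; first by apply: mulr_gt0 => //; exact: exprn_gt0.
  by apply: mulr_gt0; [lra | apply: exprn_gt0; lra].
Qed.

End Vals.

Theorem lemma12 (R : realType) (d k : nat) :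
  (d < 2 * k)%N -> (k < d)%N ->
  (2 * k%:R - d%:R) ^+ 2 < 4 * k%:R - d%:R - 2 :> R ->
  let Hs := hessian (@phi R d k) (bstar R d k) in
  \det (- Hs) =
    2 * k%:R ^+ 2 / ((d%:R - 1) * (2 * k%:R - d%:R) ^+ 2)
    * (4 * k%:R - d%:R - 2 - (2 * k%:R - d%:R) ^+ 2)
    * \prod_(i < (d - k).+1) (bstar R d k 0 i)^-1
  /\ 0 < \det (- Hs)
  /\ ((bstar R d k \in @Kset R d k /\
       forall b, b \in @Kset R d k -> b != bstar R d k ->
                 @phi R d k b < @phi R d k (bstar R d k)) ->
      neg_definite Hs).
Proof.
move=> dk kd; exact: (@main_in R d k kd dk).
Qed.
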